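(* Let $X=(X(t),t\in\mathbb{R}^d)$ be a real-valued centered isotropic Gaussian random field with continuous sample paths, whose covariance is $\mathrm{Cov}(X(s),X(t))=R_X(\|t-s\|)$ with $R_X:[0,\infty)\to\mathbb{R}$ nonincreasing. Then for any $a,b\in\mathbb{R}^d$, the straight-line path $\xi(u)=a+u(b-a)$, $0\le u\le1$, attains the supremum $$\sup_{\xi\in\mathcal{P}(a,b)}\ \min_{\mu\in M_1^+([0,1])}\int_0^1\!\!\int_0^1R_X(\|\xi(u)-\xi(v)\|)\,\mu(du)\mu(dv).$$
   Context: $\mathcal{P}(a,b)$ is the set of continuous maps $\xi:[0,1]\to\mathbb{R}^d$ with $\xi(0)=a$, $\xi(1)=b$. $M_1^+([0,1])$ is the set of Borel probability measures on $[0,1]$. (The reciprocal of this supremum is the exponent $C_X(a,b)$ in $\lim_{u\to\infty}u^{-2}\log P(\exists\,\xi\in\mathcal{P}(a,b): X(\xi(v))>u\ \forall v)=-\frac12C_X(a,b)$.) *)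

(* Defs.v *)
From HB Require Import structures.
From mathcomp Require Import all_boot all_order all_algebra.
From mathcomp Require Import all_classical all_reals all_analysis.
Set Implicit Arguments. Unset Strict Implicit. Unset Printing Implicit Defensive.
Import Order.TTheory GRing.Theory Num.Theory.
Import numFieldNormedType.Exports.
Local Open Scope classical_set_scope.
Local Open Scope ring_scope.

Section Defs.
Context {R : realType} {d : nat}.

Definition eucl_norm (x : 'rV[R]_d) : R := Num.sqrt (\sum_(i < d) x ord0 i ^+ 2).

(** A real random variable Y is Gaussian: measurable, and its law is either
    a Dirac mass (degenerate Gaussian, variance 0) or N(m, s^2) with s > 0. *)
Definition gaussian_rv {d0} {Omega : measurableType d0} (P : probability Omega R)
  (Y : Omega -> R) : Prop :=
  measurable_fun setT Y /\
  exists (m s : R), 0 <= s /\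
    forall A : set R, measurable A ->
      P (Y @^-1` A) = (if s == 0 then \d_m A else normal_prob m s A).

Definition centered_isotropic_gaussian_field {d0} {Omega : measurableType d0}
  (P : probability Omega R) (X : 'rV[R]_d -> Omega -> R) (RX : R -> R) : Prop :=
  [/\ (forall n (ts : 'I_n -> 'rV[R]_d) (c : 'I_n -> R),
         gaussian_rv P (fun w => \sum_(i < n) c i * X (ts i) w)),
      (forall t, expectation P (X t) = 0%E),
      (forall s t, covariance P (X s) (X t) = (RX (eucl_norm (t - s)))%:E) &
      (forall w, continuous (fun t => X t w))].

Definition in_Pab (a b : 'rV[R]_d) (xi : R -> 'rV[R]_d) : Prop :=
  {within `[0%R, 1%R]%classic, continuous xi} /\ xi 0 = a /\ xi 1 = b.

(** Probability measures on [0,1], seen as Borel probabilities on R carried by [0,1]. *)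
Definition prob_on01 (mu : probability R R) : Prop := mu `[0%R, 1%R]%classic = 1%E.

Definition path_energy (RX : R -> R) (xi : R -> 'rV[R]_d) (mu : probability R R) : \bar R :=
  (\int[mu]_(u in `[0%R, 1%R]%classic)
     \int[mu]_(v in `[0%R, 1%R]%classic) (RX (eucl_norm (xi u - xi v)))%:E)%E.

(** min over mu in M_1^+([0,1]) of the path_energy (written as an infimum). *)
Definition min_path_energy (RX : R -> R) (xi : R -> 'rV[R]_d) : \bar R :=
  ereal_inf [set e | exists mu : probability R R, prob_on01 mu /\ e = path_energy RX xi mu].

Definition straight_path (a b : 'rV[R]_d) : R -> 'rV[R]_d := fun u => a + u *: (b - a).

End Defs.

(* Main.v *)
Require Import Defs.
From HB Require Import structures.
From mathcomp Require Import all_boot all_order all_algebra.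
From mathcomp Require Import all_classical all_reals all_analysis.
From mathcomp Require Import ring lra.
From mathcomp Require Import measurable_realfun.
Import Order.TTheory GRing.Theory Num.Theory.
Import numFieldNormedType.Exports.
Local Open Scope classical_set_scope.
Local Open Scope ring_scope.
Set Implicit Arguments. Unset Strict Implicit. Unset Printing Implicit Defensive.

Section Aux.
Context {R : realType}.

Lemma cs_sq (n : nat) (x y : 'I_n -> R) :
  (\sum_i x i * y i) ^+ 2 <= (\sum_i x i ^+ 2) * (\sum_i y i ^+ 2).
Proof.
set A := \sum_i x i ^+ 2; set B := \sum_i y i ^+ 2; set C := \sum_i x i * y i.
have A0 : 0 <= A by apply: sumr_ge0 => i _; exact: sqr_ge0.
have B0 : 0 <= B by apply: sumr_ge0 => i _; exact: sqr_ge0.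
have key : 0 <= A * (A * B - C ^+ 2).
  have -> : A * (A * B - C ^+ 2) = \sum_i (A * y i - C * x i) ^+ 2.
    rewrite (eq_bigr (fun i => A ^+ 2 * y i ^+ 2 - (2 * A * C) * (x i * y i)
       + C ^+ 2 * x i ^+ 2)); last by move=> i _; ring.
    rewrite !big_split /= sumrN -!mulr_sumr -/A -/B -/C; ring.
  by apply: sumr_ge0 => i _; exact: sqr_ge0.
have [A00|Apos] := eqVneq A 0.
  have x0 : forall i, x i = 0.
    move=> i; have := @psumr_eq0P _ _ xpredT (fun j => x j ^+ 2) (fun j _ => sqr_ge0 (x j)) A00 i isT.
    by move/eqP; rewrite sqrf_eq0 => /eqP.
  have -> : C = 0 by rewrite /C big1 // => i _; rewrite x0 mul0r.
  by rewrite expr0n /= mulr_ge0.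
have Ap : 0 < A by rewrite lt_def Apos A0.
by move: key; rewrite pmulr_rge0 // subr_ge0.
Qed.

Lemma cs_abs (n : nat) (x y : 'I_n -> R) :
  `|\sum_i x i * y i| <= Num.sqrt (\sum_i x i ^+ 2) * Num.sqrt (\sum_i y i ^+ 2).
Proof.
rewrite -sqrtrM; last by apply: sumr_ge0 => i _; exact: sqr_ge0.
rewrite -sqrtr_sqr ler_sqrt ?cs_sq //.
by apply: mulr_ge0; apply: sumr_ge0 => i _; exact: sqr_ge0.
Qed.


Definition c01 (u : R) : R := Num.min (Num.max u 0) 1.

Lemma c01_ge0 u : 0 <= c01 u.
Proof. rewrite /c01 /Order.max /Order.min; case: (ltP u 0) => ?; case: ltP => ?; lra. Qed.

Lemma c01_le1 u : c01 u <= 1.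
Proof. rewrite /c01 /Order.max /Order.min; case: (ltP u 0) => ?; case: ltP => ?; lra. Qed.

Lemma c01_id u : 0 <= u -> u <= 1 -> c01 u = u.
Proof. rewrite /c01 /Order.max /Order.min => *; case: (ltP u 0) => ?; case: ltP => ?; lra. Qed.

Lemma c01_nd : {homo c01 : x y / x <= y}.
Proof. move=> x y; rewrite /c01 /Order.max /Order.min => *; case: (ltP x 0) => ?; case: (ltP y 0) => ?; case: ltP => ?; case: ltP => ?; lra. Qed.

Lemma c01_abs u : c01 u = (`|u| - `|u - 1| + 1) / 2.
Proof.
rewrite /c01 /Order.max /Order.min; case: (ltP u 0) => h0; case: (ltP u 1) => h1 /=.
- have e1 : u - 1 < 0 by lra.
  rewrite ltr01 (ltr0_norm h0) (ltr0_norm e1); field; done.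
- exfalso; lra.
- have e1 : u - 1 < 0 by lra.
  rewrite (ger0_norm h0) (ltr0_norm e1); field; done.
- have e1 : 0 <= u - 1 by lra.
  rewrite (ger0_norm h0) (ger0_norm e1); field; done.
Qed.

Lemma c01_cont : continuous c01.
Proof.
have -> : c01 = (fun u => (`|u| - `|u - 1| + 1) / 2).
  by apply: funext => u; exact: c01_abs.
move=> x; apply: cvgM; [|exact: cvg_cst]; apply: cvgD; [|exact: cvg_cst].
apply: cvgB; apply: cvg_norm; [exact: cvg_id|].
by apply: cvgB; [exact: cvg_id | exact: cvg_cst].
Qed.

Lemma cont_sum (I : Type) (s : seq I) (h : I -> R -> R) :
  (forall i, continuous (h i)) -> continuous (fun u => \sum_(i <- s) h i u).
Proof.
move=> hc; elim: s => [|j s IH].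
  under eq_fun do rewrite big_nil; exact: cst_continuous.
under eq_fun do rewrite big_cons.
by move=> x; apply: continuousD; [exact: hc | exact: IH].
Qed.


Section Hit.
Variable g : R -> R.
Hypothesis gc : continuous g.
Hypothesis g00 : g 0 = 0.
Hypothesis g10 : 0 <= g 1.

Definition hitS (v : R) := [set u : R | (0 <= u /\ u <= 1) /\ c01 v * g 1 <= g u].
Definition tau (v : R) : R := inf (hitS v).

Lemma hitS1 v : hitS v 1.
Proof.
split; first by split; lra.
by rewrite ler_piMl // c01_le1.
Qed.

Lemma hitS_lb v : has_lbound (hitS v).
Proof. by exists 0 => u [[]]. Qed.

Lemma tau_ge0 v : 0 <= tau v.
Proof. by apply: lb_le_inf; [exists 1; exact: hitS1 | move=> u [[]]]. Qed.

Lemma tau_le1 v : tau v <= 1.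
Proof. exact: (ge_inf (hitS_lb v) (hitS1 v)). Qed.

Lemma tau_nd : {homo tau : x y / x <= y}.
Proof.
move=> x y xy; apply: lb_le_inf; first by exists 1; exact: hitS1.
move=> u [u01 hu]; apply: (ge_inf (hitS_lb x)); split => //.
apply: le_trans hu; apply: ler_wpM2r => //; exact: c01_nd.
Qed.

Lemma g_tau v : g (tau v) = c01 v * g 1.
Proof.
set c := c01 v * g 1.
have c0 : 0 <= c by rewrite mulr_ge0 // c01_ge0.
have t0 := tau_ge0 v; have t1 := tau_le1 v.
apply/eqP; rewrite eq_le; apply/andP; split.
- rewrite leNgt; apply/negP => H.
  have gct : g @ tau v --> g (tau v) by exact: gc.
  have [e e0 He] := (nbhs_normP _ _).1 (cvgr_gt _ gct _ H).
  have {}e0 : 0 < e := e0.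
  have tpos : 0 < tau v.
    rewrite lt_def t0 andbT; apply/negP => /eqP t00.
    by move: H; rewrite t00 g00 ltNge c0.
  have [he|he] := lerP (e / 2) (tau v).
  + have := He (tau v - e / 2); rewrite /ball_ /=.
    have -> : tau v - (tau v - e / 2) = e / 2 by ring.
    rewrite ger0_norm; last lra.
    move=> /(_ ltac:(lra)) hg.
    have : tau v <= tau v - e / 2.
      apply: (ge_inf (hitS_lb v)); split; [split; lra | exact: ltW].
    lra.
  + have := He 0; rewrite /ball_ /= subr0 ger0_norm //.
    move=> /(_ ltac:(lra)); rewrite g00; lra.
- rewrite leNgt; apply/negP => H.
  have gct : g @ tau v --> g (tau v) by exact: gc.
  have [e e0 He] := (nbhs_normP _ _).1 (cvgr_lt _ gct _ H).
  have {}e0 : 0 < e := e0.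
  have [s hs1 hs2] := inf_adherent e0 (conj (ex_intro _ 1 (hitS1 v)) (hitS_lb v)).
  have st : tau v <= s := ge_inf (hitS_lb v) hs1.
  have := He s; rewrite /ball_ /= ler0_norm; last lra.
  move=> /(_ ltac:(rewrite /tau; lra)) hg.
  by case: hs1 => _ hs; rewrite -/c in hs; lra.
Qed.

End Hit.


Local Notation I01 := (`[0%R, 1%R]%classic : set R).

Lemma mI01 : measurable I01.
Proof. exact: measurable_itv. Qed.

Lemma int_bounded (mu : probability R R) (D : set R) (h : R -> \bar R) (C : R) :
  0 <= C -> measurable D -> measurable_fun D h ->
  (forall x, D x -> (`|h x| <= C%:E)%E) -> mu.-integrable D h.
Proof.
move=> C0 mD mh hb; apply/integrableP; split => //.
apply: (le_lt_trans (@integral_le_bound _ _ _ mu D h C%:E mD mh _ _)).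
- by rewrite lee_fin.
- exact: aeW.
apply: lte_mul_pinfty; [by rewrite lee_fin | by [] |].
exact: (le_lt_trans (probability_le1 _ mD) (ltry _)).
Qed.

Lemma param_meas (nu : probability R R) (G : R -> R -> R) :
  measurable_fun setT (fun p : R * R => G p.1 p.2) ->
  measurable_fun setT (fun x => (\int[nu]_(y in I01) (G x y)%:E)%E).
Proof.
move=> mG.
pose f := fun p : R * R => ((G p.1 p.2)%:E * (\1_I01 p.2)%:E)%E.
have mf : measurable_fun setT f.
  apply: emeasurable_funM; first exact/measurable_EFinP.
  apply/measurable_EFinP; apply: measurableT_comp; last exact: measurable_snd.
  exact: measurable_indic mI01.
have -> : (fun x => (\int[nu]_(y in I01) (G x y)%:E)%E) =
    (fun x => fubini_F nu (f^\+) x - fubini_F nu (f^\-) x)%E.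
  apply: funext => x; rewrite integral_mkcond.
  have -> : ((fun y => (G x y)%:E) \_ I01) = f \o (pair x).
    apply: funext => y; rewrite /patch /f /=; case: ifPn => yI;
    by rewrite indicE ?yI ?(negbTE yI) /= ?mule1 ?mule0.
  by rewrite integralE funepos_comp funeneg_comp.
apply: emeasurable_funB.
- apply: (measurable_fun_fubini_tonelli_F (m2 := nu)); first exact: measurable_funepos.
  exact: funepos_ge0.
- apply: (measurable_fun_fubini_tonelli_F (m2 := nu)); first exact: measurable_funeneg.
  exact: funeneg_ge0.
Qed.


Lemma param_bound (nu : probability R R) (G : R -> R -> R) (C : R) x :
  measurable_fun setT (fun p : R * R => G p.1 p.2) -> 0 <= C ->
  (forall y, `|G x y| <= C) ->
  (`| \int[nu]_(y in I01) (G x y)%:E | <= C%:E)%E.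
Proof.
move=> mG C0 hb.
have my : measurable_fun I01 (fun y => (G x y)%:E).
  apply: measurable_funTS; apply/measurable_EFinP.
  exact: (measurable_fun_pair2 (f := fun p : R * R => G p.1 p.2) x mG).
apply: (le_trans (le_abse_integral _ mI01 my)).
apply: (le_trans (@integral_le_bound _ _ _ nu I01 _ C%:E mI01 _ _ _)).
- exact: my.
- by rewrite lee_fin.
- by apply: aeW => y _ /=; exact: hb.
rewrite -[leRHS]mule1; apply: lee_pmul.
- by rewrite lee_fin.
- exact: measure_ge0.
- by [].
- exact: probability_le1 mI01.
Qed.

Lemma restrict01 (mu : probability R R) (h : R -> \bar R) :
  mu I01 = 1%E -> measurable_fun setT h ->
  (\int[mu]_(x in setT) h x = \int[mu]_(x in I01) h x)%E.
Proof.
move=> m1 mh.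
have mC : measurable (~` I01) by apply: measurableC; exact: mI01.
rewrite -(setUv I01) integral_setU //; last first.
- by apply/disj_setPLR => y yI /=; apply.
- by rewrite setUv.
rewrite (@null_set_integral _ _ _ mu (~` I01)) ?adde0 //.
- exact: measurable_funTS.
- have hC := @probability_setC _ _ _ mu _ mI01; rewrite m1 subee // in hC; exact: hC.
Qed.


Lemma I01_c01 u : I01 (c01 u).
Proof. by rewrite /= in_itv /= c01_ge0 c01_le1. Qed.

Lemma c01_I01 u : I01 u -> c01 u = u.
Proof. by rewrite /= in_itv /= => /andP [h1 h2]; exact: c01_id. Qed.

Section Geo.
Context {d : nat}.

Lemma en_ge0 (x : 'rV[R]_d) : 0 <= eucl_norm x.
Proof. exact: sqrtr_ge0. Qed.

Lemma en_scale c (x : 'rV[R]_d) : eucl_norm (c *: x) = `|c| * eucl_norm x.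
Proof.
rewrite /eucl_norm; under eq_bigr do rewrite mxE exprMn.
by rewrite -mulr_sumr sqrtrM ?sqr_ge0 // sqrtr_sqr.
Qed.

Lemma xi_cont (xi : R -> 'rV[R]_d) : {within I01, continuous xi} ->
  continuous (fun u => xi (c01 u)).
Proof.
move=> hc u.
have hx : xi @ within I01 (nbhs (c01 u)) --> xi (c01 u).
  by move/subspace_continuousP : hc; apply; exact: I01_c01.
have h1 : c01 @ u --> within I01 (nbhs (c01 u)).
  move=> P hP.
  have hP' : nbhs (c01 u) (fun x => I01 x -> P x) by move: hP; rewrite nbhs_simpl.
  have hQ : nbhs u (fun y => I01 (c01 y) -> P (c01 y)) := @c01_cont u _ hP'.
  have : nbhs u (fun y => P (c01 y)).
    by apply: filterS hQ => y hy; apply: hy; exact: I01_c01.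
  by [].
exact: (cvg_comp _ _ h1 hx).
Qed.

Lemma xi_coord_cont (xi : R -> 'rV[R]_d) i : {within I01, continuous xi} ->
  continuous (fun u => xi (c01 u) ord0 i).
Proof.
move=> hc u; apply: (continuous_comp (f := fun u => xi (c01 u))
  (g := fun M : 'rV[R]_d => M ord0 i)); first exact: xi_cont.
exact: coord_continuous.
Qed.

End Geo.


Section Main.
Context {d : nat}.
Variable RX : R -> R.
Hypothesis hRX : forall x y : R, 0 <= x -> x <= y -> RX y <= RX x.
Variables (a b : 'rV[R]_d) (xi : R -> 'rV[R]_d).
Hypothesis hxi : in_Pab a b xi.

Definition RXm (x : R) := RX (Num.max x 0).

Lemma RXm_ni : {homo RXm : x y /~ x <= y}.
Proof.
move=> x y xy; apply: hRX; rewrite /Order.max;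
  case: (ltP x 0) => ?; case: (ltP y 0) => ?; lra.
Qed.

Lemma RXm_meas : measurable_fun setT RXm.
Proof. by apply: nonincreasing_measurable => // x y xy; exact: RXm_ni. Qed.

Lemma RXm_pos x : 0 <= x -> RXm x = RX x.
Proof. by move=> x0; rewrite /RXm (max_idPl x0). Qed.

Definition xc u := xi (c01 u).
Definition ww (i : 'I_d) := b ord0 i - a ord0 i.
Definition L2 := \sum_i ww i ^+ 2.
Definition LL := Num.sqrt L2.
Definition gg u := \sum_i (xc u ord0 i - a ord0 i) * ww i.
Definition tt := tau gg.

Lemma L2_ge0 : 0 <= L2.
Proof. by apply: sumr_ge0 => i _; exact: sqr_ge0. Qed.

Lemma xc0 : xc 0 = a.
Proof. by rewrite /xc c01_id ?lexx ?ler01 //; case: hxi => _ []. Qed.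

Lemma xc1 : xc 1 = b.
Proof. by rewrite /xc c01_id ?lexx ?ler01 //; case: hxi => _ []. Qed.

Lemma xc_coord_cont i : continuous (fun u => xc u ord0 i).
Proof. by apply: xi_coord_cont; case: hxi. Qed.

Lemma gg_cont : continuous gg.
Proof.
apply: cont_sum => i x.
have h1 : {for x, continuous (fun u => xc u ord0 i - a ord0 i)}.
  by apply: (@continuousB _ _ _ (fun u => xc u ord0 i) (cst (a ord0 i))); [exact: xc_coord_cont | exact: cvg_cst].
exact: (@continuousM _ _ (fun u => xc u ord0 i - a ord0 i) (cst (ww i)) x h1 (cvg_cst _)).
Qed.

Lemma gg0 : gg 0 = 0.
Proof. by rewrite /gg big1 // => i _; rewrite xc0 subrr mul0r. Qed.

Lemma gg1 : gg 1 = L2.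
Proof. by rewrite /gg /L2; apply: eq_bigr => i _; rewrite xc1 expr2. Qed.

Lemma tt_ge0 v : 0 <= tt v.
Proof. by apply: tau_ge0; rewrite gg1; exact: L2_ge0. Qed.
Lemma tt_le1 v : tt v <= 1.
Proof. by apply: tau_le1; rewrite gg1; exact: L2_ge0. Qed.
Lemma tt_nd : {homo tt : x y / x <= y}.
Proof. by apply: tau_nd; rewrite gg1; exact: L2_ge0. Qed.
Lemma gg_tt v : gg (tt v) = c01 v * L2.
Proof.
rewrite /tt g_tau; [by rewrite gg1 | exact: gg_cont | exact: gg0 | rewrite gg1; exact: L2_ge0].
Qed.

Lemma key v v' :
  `|c01 v - c01 v'| * LL <= eucl_norm (xc (tt v) - xc (tt v')).
Proof.
set N := eucl_norm _.
have N0 : 0 <= N by exact: en_ge0.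
have E : (c01 v - c01 v') * L2 =
    \sum_i (xc (tt v) ord0 i - xc (tt v') ord0 i) * ww i.
  rewrite mulrBl -!gg_tt /gg -sumrB; apply: eq_bigr => i _; ring.
have H : `|c01 v - c01 v'| * L2 <= N * LL.
  have -> : `|c01 v - c01 v'| * L2 = `|(c01 v - c01 v') * L2|.
    by rewrite normrM (ger0_norm L2_ge0).
  rewrite E.
  have -> : N = Num.sqrt (\sum_i (xc (tt v) ord0 i - xc (tt v') ord0 i) ^+ 2).
    by rewrite /N /eucl_norm; congr Num.sqrt; apply: eq_bigr => i _; rewrite !mxE.
  exact: cs_abs.
have LL0 : 0 <= LL by exact: sqrtr_ge0.
have L2E : L2 = LL * LL by rewrite -expr2 sqr_sqrtr // L2_ge0.
have [LLz|LLp] := eqVneq LL 0; first by rewrite LLz mulr0.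
have LLpos : 0 < LL by rewrite lt_def LLp LL0.
by rewrite -(ler_pM2r LLpos) -mulrA -L2E.
Qed.

Lemma abs_between (lo hi x : R) : lo <= x -> x <= hi -> `|x| <= `|lo| + `|hi|.
Proof.
move=> h1 h2; have e1 := ler_norm hi; have e2 := ler_norm (- lo).
rewrite normrN in e2; have e3 := normr_ge0 lo; have e4 := normr_ge0 hi.
rewrite ler_norml; apply/andP; split; lra.
Qed.

Definition FF u u' := RXm (Num.sqrt (\sum_i (xc u ord0 i - xc u' ord0 i) ^+ 2)).
Definition Gl v v' := RXm (`|c01 v - c01 v'| * LL).

Lemma en_diff u u' :
  eucl_norm (xc u - xc u') = Num.sqrt (\sum_i (xc u ord0 i - xc u' ord0 i) ^+ 2).
Proof. by rewrite /eucl_norm; congr Num.sqrt; apply: eq_bigr => i _; rewrite !mxE. Qed.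

Lemma FF_meas : measurable_fun setT (fun p : R * R => FF p.1 p.2).
Proof.
apply: measurableT_comp; first exact: RXm_meas.
apply: measurableT_comp; first exact: (continuous_measurable_fun (@sqrt_continuous R)).
apply: measurable_sum => i; apply: measurable_funX.
apply: measurable_funB.
- apply: (measurableT_comp (f := fun u => xc u ord0 i) (g := fst)).
    by apply: continuous_measurable_fun; exact: xc_coord_cont.
  exact: measurable_fst.
- apply: (measurableT_comp (f := fun u => xc u ord0 i) (g := snd)).
    by apply: continuous_measurable_fun; exact: xc_coord_cont.
  exact: measurable_snd.
Qed.

Lemma Gl_meas : measurable_fun setT (fun p : R * R => Gl p.1 p.2).
Proof.
apply: measurableT_comp; first exact: RXm_meas.
apply: (@measurable_funM _ _ _ setT (fun p : R * R => `|c01 p.1 - c01 p.2|) (cst LL)); last exact: measurable_cst.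
apply: measurableT_comp; first exact: normr_measurable.
apply: measurable_funB.
- apply: (measurableT_comp (f := c01) (g := fst)).
    by apply: continuous_measurable_fun; exact: c01_cont.
  exact: measurable_fst.
- apply: (measurableT_comp (f := c01) (g := snd)).
    by apply: continuous_measurable_fun; exact: c01_cont.
  exact: measurable_snd.
Qed.

Lemma xc_c01 u : xc (c01 u) = xc u.
Proof. by rewrite /xc (c01_id (c01_ge0 u) (c01_le1 u)). Qed.

Lemma FF_bound : exists C, 0 <= C /\ forall u u', `|FF u u'| <= C.
Proof.
pose S t := \sum_i xc t ord0 i ^+ 2.
have Sc : continuous S.
  apply: cont_sum => i x.
  have -> : (fun t => xc t ord0 i ^+ 2) =
      ((fun u => xc u ord0 i) \* (fun u => xc u ord0 i)).
    by apply: funext => u; rewrite /= expr2.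
  by apply: continuousM; exact: xc_coord_cont.
have [c _ hc] := EVT_max ler01 (continuous_subspaceT Sc).
have SM u : S u <= S c.
  rewrite /S -xc_c01; apply: hc; rewrite in_itv /= c01_ge0 c01_le1 //.
have S0 u : 0 <= S u by apply: sumr_ge0 => i _; exact: sqr_ge0.
set M := Num.sqrt (4 * S c).
exists (`|RXm M| + `|RXm 0|); split; first by rewrite addr_ge0.
move=> u u'; apply: abs_between.
- apply: RXm_ni; rewrite ler_sqrt; last by rewrite mulr_ge0.
  apply: (@le_trans _ _ (2 * (S u + S u'))); last by have := SM u; have := SM u'; lra.
  rewrite /S mulrDr !mulr_sumr -big_split /=; apply: ler_sum => i _.
  have : 0 <= (xc u ord0 i + xc u' ord0 i) ^+ 2 by exact: sqr_ge0.
  have -> : (xc u ord0 i + xc u' ord0 i) ^+ 2 = 2 * xc u ord0 i ^+ 2 + 2 * xc u' ord0 i ^+ 2 - (xc u ord0 i - xc u' ord0 i) ^+ 2 by ring.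
  lra.
- by apply: RXm_ni; exact: sqrtr_ge0.
Qed.

Lemma Gl_bound : exists C, 0 <= C /\ forall v v', `|Gl v v'| <= C.
Proof.
have LL0 : 0 <= LL by exact: sqrtr_ge0.
exists (`|RXm LL| + `|RXm 0|); split; first by rewrite addr_ge0.
move=> v v'; have h1 : `|c01 v - c01 v'| <= 1.
  rewrite ler_norml; have := c01_ge0 v; have := c01_le1 v;
  have := c01_ge0 v'; have := c01_le1 v'; move=> *; apply/andP; split; lra.
apply: abs_between; apply: RXm_ni.
- by rewrite -[leRHS]mul1r ler_wpM2r.
- by rewrite mulr_ge0.
Qed.

Lemma FF_le_Gl v v' : FF (tt v) (tt v') <= Gl v v'.
Proof. by apply: RXm_ni; rewrite -en_diff; exact: key. Qed.

Lemma FF_eq u u' : I01 u -> I01 u' -> FF u u' = RX (eucl_norm (xi u - xi u')).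
Proof.
move=> hu hu'; rewrite /FF -en_diff RXm_pos; last exact: en_ge0.
by rewrite /xc !c01_I01.
Qed.

Lemma Gl_eq v v' : I01 v -> I01 v' ->
  Gl v v' = RX (eucl_norm (straight_path a b v - straight_path a b v')).
Proof.
move=> hv hv'; rewrite /Gl !c01_I01 // RXm_pos; last by rewrite mulr_ge0 // sqrtr_ge0.
congr RX.
have -> : straight_path a b v - straight_path a b v' = (v - v') *: (b - a).
  by rewrite /straight_path opprD addrACA subrr add0r -scalerBl.
rewrite en_scale; congr (_ * _).
by rewrite /eucl_norm /LL /L2; congr Num.sqrt; apply: eq_bigr => i _; rewrite !mxE.
Qed.

Lemma tt_meas : measurable_fun setT tt.
Proof. by apply: nondecreasing_measurable => // x y xy; exact: tt_nd. Qed.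

Lemma tt_pre : tt @^-1` I01 = setT.
Proof.
apply/seteqP; split => // v _ /=; rewrite in_itv /=; apply/andP; split.
- exact: tt_ge0.
- exact: tt_le1.
Qed.

Lemma main_ineq (mu : probability R R) : prob_on01 mu ->
  exists nu : probability R R, prob_on01 nu /\
    (path_energy RX xi nu <= path_energy RX (straight_path a b) mu)%E.
Proof.
move=> hmu.
pose ttm : {mfun R >-> R} := HB.pack tt (isMeasurableFun.Build _ _ _ _ tt tt_meas).
pose nu : probability R R := distribution mu ttm.
have hnu : prob_on01 nu.
  rewrite /prob_on01; change (mu (tt @^-1` I01) = 1%E); rewrite tt_pre.
  exact: probability_setT.
exists nu; split => //.
have [CF [CF0 hCF]] := FF_bound.
have [CG [CG0 hCG]] := Gl_bound.
pose H u := (\int[nu]_(u' in I01) (FF u u')%:E)%E.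
pose K v := (\int[mu]_(v' in I01) (Gl v v')%:E)%E.
have mH : measurable_fun setT H := param_meas nu FF_meas.
have mK : measurable_fun setT K := param_meas mu Gl_meas.
have bH u : (`|H u| <= CF%:E)%E := param_bound nu (x:=u) FF_meas CF0 (hCF u).
have bK v : (`|K v| <= CG%:E)%E := param_bound mu (x:=v) Gl_meas CG0 (hCG v).
have mHt : measurable_fun setT (H \o tt) := measurableT_comp mH tt_meas.
have E1 : path_energy RX xi nu = (\int[nu]_(u in I01) H u)%E.
  rewrite /path_energy; apply: eq_integral => u; rewrite inE => hu.
  apply: eq_integral => u'; rewrite inE => hu'.
  by rewrite FF_eq.
have E2 : (\int[nu]_(u in I01) H u = \int[mu]_(v in I01) H (tt v))%E.
  have -> : (\int[nu]_(u in I01) H u =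
      \int[mu]_(v in ttm @^-1` I01) (H \o ttm) v)%E.
    apply: (@integral_pushforward _ _ _ _ _ (ttm : R -> R) tt_meas mu I01 H mH _ mI01).
    change (mu.-integrable (tt @^-1` I01) (H \o tt)); rewrite tt_pre.
    by apply: (int_bounded _ CF0) => // v _; exact: bH.
  change (\int[mu]_(v in tt @^-1` I01) (H \o tt) v =
      \int[mu]_(v in I01) H (tt v))%E.
  by rewrite tt_pre (restrict01 hmu).
have E4 : (\int[mu]_(v in I01) K v = path_energy RX (straight_path a b) mu)%E.
  rewrite /path_energy; apply: eq_integral => v; rewrite inE => hv.
  apply: eq_integral => v'; rewrite inE => hv'.
  by rewrite Gl_eq.
rewrite E1 E2 -E4; apply: le_integral; first exact: mI01.
- apply: (int_bounded _ CF0); first exact: mI01.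
    exact: measurable_funTS.
  by move=> v _; exact: bH.
- apply: (int_bounded _ CG0); first exact: mI01.
    exact: measurable_funTS.
  by move=> v _; exact: bK.
move=> v; rewrite inE => hv.
have mFs : measurable_fun setT (fun u' => (FF (tt v) u')%:E).
  apply/measurable_EFinP.
  exact: (measurable_fun_pair2 (f := fun p : R * R => FF p.1 p.2) (tt v) FF_meas).
have mGs : measurable_fun setT (fun v' => (Gl v v')%:E).
  apply/measurable_EFinP.
  exact: (measurable_fun_pair2 (f := fun p : R * R => Gl p.1 p.2) v Gl_meas).
have mFt : measurable_fun setT (fun v' => (FF (tt v) (tt v'))%:E).
  exact: (measurableT_comp mFs tt_meas).
have -> : H (tt v) = (\int[mu]_(v' in I01) (FF (tt v) (tt v'))%:E)%E.
  rewrite /H.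
  have -> : (\int[nu]_(u' in I01) (FF (tt v) u')%:E =
      \int[mu]_(v' in ttm @^-1` I01) ((fun u' => (FF (tt v) u')%:E) \o ttm) v')%E.
    apply: (@integral_pushforward _ _ _ _ _ (ttm : R -> R) tt_meas mu I01 _ mFs _ mI01).
    change (mu.-integrable (tt @^-1` I01) ((fun u' => (FF (tt v) u')%:E) \o tt)).
    rewrite tt_pre; apply: (int_bounded _ CF0) => // v' _.
    exact: hCF.
  change (\int[mu]_(v' in tt @^-1` I01) (fun u' => (FF (tt v) u')%:E) (tt v') =
      \int[mu]_(v' in I01) (FF (tt v) (tt v'))%:E)%E.
  by rewrite tt_pre (restrict01 hmu).
apply: le_integral; first exact: mI01.
- apply: (int_bounded _ CF0); first exact: mI01.
    exact: measurable_funTS.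
  by move=> v' _ /=; exact: hCF.
- apply: (int_bounded _ CG0); first exact: mI01.
    exact: measurable_funTS.
  by move=> v' _ /=; exact: hCG.
by move=> v' _; rewrite lee_fin; exact: FF_le_Gl.
Qed.

End Main.

End Aux.

Unset Implicit Arguments.

Theorem proposition8p4 (R : realType) (d : nat) (d0 : measure_display)
  (Omega : measurableType d0) (P : probability Omega R)
  (X : 'rV[R]_d -> Omega -> R) (RX : R -> R) :
  centered_isotropic_gaussian_field P X RX ->
  (forall x y : R, 0 <= x -> x <= y -> RX y <= RX x) ->
  forall a b : 'rV[R]_d,
    in_Pab a b (straight_path a b) /\
    min_path_energy RX (straight_path a b) =
      ereal_sup [set min_path_energy RX xi | xi in [set xi | in_Pab a b xi]].
Proof.
move=> _ hRX a b.
have hline : in_Pab a b (straight_path a b).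
  split; last split.
  - apply: continuous_subspaceT => x; rewrite /straight_path.
    apply: cvgD; first exact: cvg_cst.
    by apply: cvgZr_tmp; exact: cvg_id.
  - by rewrite /straight_path scale0r addr0.
  - by rewrite /straight_path scale1r addrC subrK.
split => //.
apply/eqP; rewrite eq_le; apply/andP; split.
- by apply: ereal_sup_ubound; exists (straight_path a b).
- apply: ge_ereal_sup => _ [xi hxi <-].
  apply: le_ereal_inf_tmp => _ [mu [hmu ->]].
  have [nu [hnu hle]] := main_ineq hRX hxi hmu.
  by apply: le_trans hle; apply: ereal_inf_lbound; exists nu; split.
Qed.
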